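(* Consider a synchronous round-based message-passing system of $n$ processes $p_1,\dots,p_n$ with reliable point-to-point channels between every pair of processes, with authentication (unforgeable signatures), in which up to $t$ processes, for any $0 \le t < n$, may be Byzantine. Then the two-round algorithm $\mathcal{A}_1$ described in the context solves $k$-set agreement for $k = \lfloor \frac{n}{n-t} \rfloor + 1$.
   Context: Model: in each round every process sends messages which are received in that same round. Every process $p_i$ has a private signing key and knows all public keys; signatures of correct processes cannot be forged, so a faulty process cannot produce or alter a value signed by a correct process; messages whose signatures are invalid are ignored (treated as not received). A Byzantine process may deviate arbitrarily from the protocol; a correct process never fails. $k$-set agreement (here decisions are allowed in $V \cup \{\bot\}$, where $\bot$ counts as a decided value): each process proposes an initial value from a set $V$; (Validity) if all correct processes propose the same value $v$, no correct process decides a value different from $v$; (Agreement) at most $k$ distinct values are decided by correct processes; (Termination) every correct process eventually decides. Algorithm $\mathcal{A}_1$, code of $p_i$ with input $v_i$: $p_i$ keeps an $n\times n$ matrix $M_i$ with all entries initially $\bot$, and sets $M_i[i][i] := v_i$. Round 1: $p_i$ sends $v_i$, signed by $p_i$, to all processes; when it receives a validly signed value $v_j$ from $p_j$ it sets $M_i[i][j] := v_j$. Round 2: $p_i$ sends its row $M_i[i][\ast]$ (each non-$\bot$ entry $M_i[i][j]$ carrying $p_j$'s signature) to all processes; when it receives such a vector from $p_j$ it stores it as $M_i[j][\ast]$ (entries without a valid signature of their originator being treated as $\bot$). At the end of round 2, $p_i$ builds a vector $V_i$ with $V_i[i] = v_i$ and, for each $j \ne i$: letting $w = M_i[i][j]$,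 if $w = \bot$ then $V_i[j] = \bot$; otherwise $V_i[j] = w$, except that $V_i[j] := \bot$ if there is $\ell \ne i$ with $M_i[\ell][j] \ne \bot$ and $M_i[\ell][j] \ne w$. Finally, if at least $n-t$ entries of $V_i$ are equal to $v_i$, $p_i$ decides $v_i$; otherwise it decides $\bot$. *)

(* Defs.v *)
From mathcomp Require Import all_boot.
Set Implicit Arguments. Unset Strict Implicit. Unset Printing Implicit Defensive.

Section A1.
Variables (V : eqType) (n t : nat).
Variable v : 'I_n -> V.
(* set of Byzantine processes *)
Variable F : {set 'I_n}.
(* r1 j i : the (validly signed by p_j) value faulty p_j sends p_i in round 1,
   None = nothing received / invalid signature. *)
Variable r1 : 'I_n -> 'I_n -> option V.
(* r2 j i l : entry l of the vector faulty p_j sends p_i in round 2, after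
   signature validation (None = bot / invalid signature). *)
Variable r2 : 'I_n -> 'I_n -> 'I_n -> option V.

(* Unforgeability: a correct p_l only ever signs v l, so in a round-2 vector
   sent by a faulty process, entry l (l correct) is bot or v l. *)
Definition adversary_ok : Prop :=
  forall j i l, j \in F -> l \notin F -> r2 j i l = None \/ r2 j i l = Some (v l).

(* M_i[i][j] : own row after round 1, for correct p_i *)
Definition row1 (i j : 'I_n) : option V :=
  if j == i then Some (v i)
  else if j \in F then r1 j i else Some (v j).

(* M_i[j][l] after round 2, for correct p_i *)
Definition mat (i j l : 'I_n) : option V :=
  if j == i then row1 i l
  else if j \in F then r2 j i l else row1 j l.

Definition vecV (i j : 'I_n) : option V :=
  if j == i then Some (v i)
  else match row1 i j with
       | None => None
       | Some w =>
         if [exists l : 'I_n, (l != i) && (mat i l j != None) && (mat i l j != Some w)]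
         then None else Some w
       end.

(* decision of correct p_i; None stands for bot *)
Definition decide (i : 'I_n) : option V :=
  if n - t <= #|[pred j | vecV i j == Some (v i)]| then Some (v i) else None.

End A1.

(* Main.v *)
Require Import Defs.
From mathcomp Require Import all_boot.
Set Implicit Arguments. Unset Strict Implicit. Unset Printing Implicit Defensive.

Section H.
Variables (V : eqType) (n t : nat) (v : 'I_n -> V) (F : {set 'I_n})
  (r1 : 'I_n -> 'I_n -> option V) (r2 : 'I_n -> 'I_n -> 'I_n -> option V).

Lemma vecV_some i j w : j != i -> vecV v F r1 r2 i j = Some w ->
  row1 v F r1 i j = Some w /\
  forall l, l != i -> mat v F r1 r2 i l j = None \/ mat v F r1 r2 i l j = Some w.
Proof.
move=> nji; rewrite /vecV (negbTE nji).
case: (row1 v F r1 i j) => [w'|] //.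
case: ifP => [_ //|/negbT hex [<-]]; split=> // l hl.
move/existsPn: hex => /(_ l); rewrite hl /=.
case: (mat v F r1 r2 i l j) => [u|]; last by left.
by rewrite /= negbK => /eqP ->; right.
Qed.

Lemma key i i' j : i \notin F -> i' \notin F ->
  vecV v F r1 r2 i j = Some (v i) -> vecV v F r1 r2 i' j = Some (v i') ->
  v i = v i'.
Proof.
move=> hi hi' h1 h2.
have [<-|nii'] := eqVneq i i'; first by [].
have ni'i : i' != i by rewrite eq_sym.
have [ej|nji] := eqVneq j i.
  subst j.
  have [r _] := vecV_some nii' h2.
  move: r; rewrite /row1 (negbTE nii') (negbTE hi) => -[]; done.
have [ej'|nji'] := eqVneq j i'.
  subst j.
  have [r _] := vecV_some ni'i h1.
  move: r; rewrite /row1 eq_sym (negbTE nii') (negbTE hi') => -[]; done.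
have [_ hl] := vecV_some nji h1.
have [r2' _] := vecV_some nji' h2.
have := hl i'; rewrite eq_sym nii' /mat eq_sym (negbTE nii') (negbTE hi') r2'.
by move=> /(_ isT) [|[]].
Qed.

Lemma dec_shape i a : decide t v F r1 r2 i = Some a -> v i = a.
Proof. by rewrite /decide; case: ifP => // _ []. Qed.

Lemma vecV_good x i j : adversary_ok v F r2 -> (forall i, i \notin F -> v i = x) ->
  i \notin F -> j \notin F -> vecV v F r1 r2 i j = Some x.
Proof.
move=> hadv hx hi hj; rewrite /vecV.
case: eqP => [_|nji]; first by rewrite (hx i hi).
rewrite /row1; move/eqP: nji => nji; rewrite (negbTE nji) (negbTE hj) (hx j hj).
rewrite ifF //; apply/negbTE/existsPn => l; apply/negP => /andP[/andP[nli hn] hs].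
move: hn hs; rewrite /mat (negbTE nli); case: ifP => hl.
  by case: (hadv l i j hl hj) => -> //; rewrite (hx j hj) eqxx.
rewrite /row1 (negbTE hj); have [ejl|njl] := eqVneq j l.
  by rewrite -ejl (hx j hj) eqxx.
by rewrite (hx j hj) eqxx.
Qed.
End H.

Theorem theorem2 (V : eqType) (n t : nat) (ht : t < n)
  (v : 'I_n -> V) (F : {set 'I_n}) (hF : #|F| <= t)
  (r1 : 'I_n -> 'I_n -> option V) (r2 : 'I_n -> 'I_n -> 'I_n -> option V)
  (hadv : adversary_ok v F r2) :
  let k := n %/ (n - t) + 1 in
  (* Validity *)
  (forall x : V, (forall i, i \notin F -> v i = x) ->
     forall i, i \notin F -> decide t v F r1 r2 i = Some x) /\
  (* Agreement *)
  size (undup [seq decide t v F r1 r2 i | i <- enum (~: F)]) <= k.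
Proof.
move=> k; split.
  move=> x hx i hi; rewrite /decide (hx i hi) ifT //.
  apply: (@leq_trans #|~: F|).
    by rewrite cardsCs card_ord setCK leq_sub2l.
  apply: subset_leq_card; apply/subsetP => j; rewrite inE => hj.
  by rewrite inE /= (vecV_good r1 hadv hx hi hj).
pose dec i := decide t v F r1 r2 i.
pose A := undup [seq v i | i <- enum (~: F) & dec i == Some (v i)].
have hD : size (undup [seq dec i | i <- enum (~: F)]) <= (size A).+1.
  have -> : (size A).+1 = size (None :: map Some A) by rewrite /= size_map.
  apply: uniq_leq_size; first exact: undup_uniq.
  move=> o; rewrite mem_undup => /mapP [i hi ->].
  rewrite /dec /decide; case: ifP => hc; last by rewrite inE.
  rewrite inE; apply/orP; right; apply: map_f; rewrite mem_undup.
  by apply: map_f; rewrite mem_filter hi andbT /dec /decide hc eqxx.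
apply: (leq_trans hD); rewrite /k addn1 ltnS.
have hnt : 0 < n - t by rewrite subn_gt0.
rewrite leq_divRL //.
pose S a := [set j | [exists i, (i \notin F) && (dec i == Some a) && (vecV v F r1 r2 i j == Some a)]].
pose U s := [set j | has (fun a => j \in S a) s].
have hA : forall a, a \in A -> n - t <= #|S a|.
  move=> a; rewrite mem_undup => /mapP [i]; rewrite mem_filter => /andP [hdi hi] ->.
  move: (hdi); rewrite /dec /decide; case: ifP => hc; last by []. move=> _.
  apply: (leq_trans hc); apply: subset_leq_card; apply/subsetP => j.
  rewrite !inE => hj; apply/existsP; exists i.
  by rewrite hj hdi !andbT -in_setC -mem_enum.
have hdisj : forall a b j, j \in S a -> j \in S b -> a = b.
  move=> a b j; rewrite !inE => /existsP [i /andP [/andP [hi hdi] hvi]].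
  move=> /existsP [i' /andP [/andP [hi' hdi'] hvi']].
  have ea := dec_shape (eqP hdi); have eb := dec_shape (eqP hdi').
  rewrite -ea -eb; apply: (key (r1:=r1) (r2:=r2) (j:=j) hi hi').
    by rewrite (eqP hvi) ea.
  by rewrite (eqP hvi') eb.
have hind : forall s, uniq s -> {subset s <= A} -> size s * (n - t) <= #|U s|.
  elim=> [|a s IH] /=; first by rewrite mul0n.
  move=> /andP [nas us] sub.
  have -> : U (a :: s) = S a :|: U s.
    by apply/setP => j; rewrite in_setU !in_set /= inE.
  have hI : S a :&: U s = set0.
    apply/setP => j; rewrite in_setI in_set0 [j \in U s]inE; apply/negbTE/negP => /andP [hja /hasP [b hb hjb]].
    by move: nas; rewrite (hdisj _ _ _ hja hjb) hb.
  have := cardsUI (S a) (U s); rewrite hI cards0 addn0 => ->.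
  rewrite mulSn leq_add //; first by apply: hA; apply: sub; rewrite inE eqxx.
  by apply: IH => // c hc; apply: sub; rewrite inE hc orbT.
apply: (leq_trans (hind A (undup_uniq _) (fun _ h => h))).
by rewrite -[n in _ <= n]card_ord max_card.
Qed.
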